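(* $E_{range}<_{\mathrm{Learn}}E_3$: every $E_{range}$-learnable family of structures is $E_3$-learnable, and there is a family that is $E_3$-learnable but not $E_{range}$-learnable.
   Context: All structures are countable, have domain $\mathbb{N}$, are in a finite relational signature, and are identified with their atomic diagrams (elements of $2^{\mathbb{N}}$). A family of structures is a countable set of pairwise nonisomorphic such structures. $\mathrm{LD}(\mathfrak{K})\subseteq 2^{\mathbb{N}}$ is the set of structures with domain $\mathbb{N}$ isomorphic to a member of $\mathfrak{K}$ (subspace topology). For an equivalence relation $E$ on a space $X$, $\mathfrak{K}$ is $E$-learnable if there is a continuous $\Gamma:\mathrm{LD}(\mathfrak{K})\to X$ with $\mathcal{S}\cong\mathcal{S}'\iff\Gamma(\mathcal{S})\,E\,\Gamma(\mathcal{S}')$ for all $\mathcal{S},\mathcal{S}'\in\mathrm{LD}(\mathfrak{K})$. On Baire space: $p\,E_0\,q\iff\exists m\,\forall n\ge m\ p(n)=q(n)$; $p\,E_{range}\,q\iff\{p(m):m\}=\{q(m):m\}$. Fix a computable bijection $\langle\cdot,\cdot\rangle:\mathbb{N}^2\to\mathbb{N}$; for $p\in\mathbb{N}^{\mathbb{N}\times\mathbb{N}}$ the $m$-th column is $p^{[m]}(n)=p(\langle m,n\rangle)$, and $p\,E_3\,q\iff\forall m\ p^{[m]}\,E_0\,q^{[m]}$. $X\leq_{\mathrm{Learn}}Y$ means every $X$-learnable family is $Y$-learnable; $<_{\mathrm{Learn}}$ means $\leq_{\mathrm{Learn}}$ and not the converse. *)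

(* Defs.v *)
From Stdlib Require Import Arith List.
Import ListNotations.

(* A finite relational signature: the list of arities of its relation symbols. *)
Definition signature := list nat.

(* An atom R_i(x_1,...,x_k): a relation index and a tuple of elements of N. *)
Definition atom := (nat * list nat)%type.

Definition valid_atom (sig : signature) (a : atom) : Prop :=
  fst a < length sig /\ length (snd a) = nth (fst a) sig 0.

(* A structure with domain N, identified with its atomic diagram: a 0/1 value on
   every (valid) atom.  Values on invalid atoms are normalized to false, so the
   structures for sig are exactly the points of 2^{valid atoms} (≅ 2^N). *)
Definition structure := atom -> bool.

Definition wf_structure (sig : signature) (S : structure) : Prop :=
  forall a, ~ valid_atom sig a -> S a = false.

Definition iso (sig : signature) (S S' : structure) : Prop :=
  exists f g : nat -> nat,
    (forall x, g (f x) = x) /\ (forall x, f (g x) = x) /\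
    (forall a, valid_atom sig a -> S a = S' (fst a, map f (snd a))).

Definition family (sig : signature) (K : structure -> Prop) : Prop :=
  (forall S, K S -> wf_structure sig S) /\
  (exists e : nat -> option structure, forall S, K S <-> exists n, e n = Some S) /\
  (forall S S', K S -> K S' -> iso sig S S' -> S = S').

Definition LD (sig : signature) (K : structure -> Prop) (S : structure) : Prop :=
  wf_structure sig S /\ exists T, K T /\ iso sig S T.

Definition baire := nat -> nat.

Definition continuous_on_LD (sig : signature) (K : structure -> Prop)
    (Gamma : structure -> baire) : Prop :=
  forall S, LD sig K S -> forall n, exists L : list atom,
    forall S', LD sig K S' -> (forall a, In a L -> S' a = S a) ->
      forall k, k < n -> Gamma S' k = Gamma S k.

Definition learnable (E : baire -> baire -> Prop) (sig : signature)
    (K : structure -> Prop) : Prop :=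
  exists Gamma : structure -> baire,
    continuous_on_LD sig K Gamma /\
    forall S S', LD sig K S -> LD sig K S' ->
      (iso sig S S' <-> E (Gamma S) (Gamma S')).

Definition E0 (p q : baire) : Prop :=
  exists m, forall n, m <= n -> p n = q n.

Definition Erange (p q : baire) : Prop :=
  (forall m, exists k, p m = q k) /\ (forall m, exists k, q m = p k).

(* Cantor pairing: a computable bijection N^2 -> N. *)
Definition cpair (m n : nat) : nat := (m + n) * (m + n + 1) / 2 + n.

Definition column (p : baire) (m : nat) : baire := fun n => p (cpair m n).

Definition E3 (p q : baire) : Prop :=
  forall m, E0 (column p m) (column q m).

Definition learn_le (X Y : baire -> baire -> Prop) : Prop :=
  forall sig K, family sig K -> learnable X sig K -> learnable Y sig K.

Definition learn_lt (X Y : baire -> baire -> Prop) : Prop :=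
  learn_le X Y /\ ~ learn_le Y X.

(* Main.v *)
Require Import Defs.
From Stdlib Require Import Arith Lia List Classical Cantor.
Import ListNotations.

Lemma cpair_to m n : cpair m n = Cantor.to_nat (m, n).
Proof. rewrite Cantor.to_nat_spec2. unfold cpair.
  replace ((n + m) * S (n + m)) with ((m + n) * (m + n + 1)) by ring. lia. Qed.

Lemma cpair_ge m n : n <= cpair m n.
Proof. rewrite cpair_to. pose proof (Cantor.to_nat_non_decreasing m n). lia. Qed.

Definition inpre (p : baire) (m n : nat) : bool := existsb (fun j => p j =? m) (seq 0 (S n)).

Definition conv (p : baire) (k : nat) : nat :=
  let (m, n) := Cantor.of_nat k in if inpre p m n then 1 else 0.

Lemma conv_col p m n : column (conv p) m n = if inpre p m n then 1 else 0.
Proof. unfold column, conv. rewrite cpair_to, Cantor.cancel_of_to. reflexivity. Qed.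

Lemma inpre_true p m n : inpre p m n = true <-> exists j, j <= n /\ p j = m.
Proof. unfold inpre. rewrite existsb_exists. split.
 - intros [j [Hj Hp]]. apply in_seq in Hj. apply Nat.eqb_eq in Hp. exists j. split; [lia|auto].
 - intros [j [Hj Hp]]. exists j. split. apply in_seq. lia. apply Nat.eqb_eq; auto. Qed.

Lemma E0_side p q : E3 (conv p) (conv q) -> forall m, exists k, p m = q k.
Proof. intros H m. destruct (H (p m)) as [N HN]. specialize (HN (N + m) ltac:(lia)).
  rewrite !conv_col in HN.
  assert (inpre p (p m) (N+m) = true) as E. { apply inpre_true. exists m; split; [lia|auto]. }
  rewrite E in HN. destruct (inpre q (p m) (N+m)) eqn:E2; [|discriminate].
  apply inpre_true in E2. destruct E2 as [k [_ Hk]]. exists k; auto. Qed.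

Lemma E3_sym p q : E3 p q -> E3 q p.
Proof. intros H m. destruct (H m) as [N HN]. exists N. intros n Hn. symmetry. auto. Qed.

Lemma range_E3 p q : Erange p q <-> E3 (conv p) (conv q).
Proof. split.
 - intros [H1 H2] m. unfold E0. destruct (classic (exists j, p j = m)) as [[j Hj]|Hn].
   + destruct (H1 j) as [k Hk]. exists (j + k). intros n Hn. rewrite !conv_col.
     assert (inpre p m n = true) as ->. { apply inpre_true. exists j; split; [lia|auto]. }
     assert (inpre q m n = true) as ->. { apply inpre_true. exists k; split; [lia|congruence]. }
     reflexivity.
   + exists 0. intros n _. rewrite !conv_col.
     destruct (inpre p m n) eqn:E1.
     { apply inpre_true in E1. destruct E1 as [j [_ Hj]]. exfalso; eauto. }
     destruct (inpre q m n) eqn:E2.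
     { apply inpre_true in E2. destruct E2 as [k [_ Hk]]. destruct (H2 k) as [j Hj].
       exfalso. apply Hn. exists j. congruence. }
     reflexivity.
 - intros H. split. apply E0_side; auto. apply E0_side. apply E3_sym; auto.
Qed.

Lemma of_nat_snd_le k : snd (Cantor.of_nat k) <= k.
Proof. pose proof (Cantor.cancel_to_of k). destruct (Cantor.of_nat k) as [x y] eqn:E. simpl.
 pose proof (Cantor.to_nat_non_decreasing x y). lia. Qed.

Lemma inpre_ext p q m n : (forall j, j <= n -> p j = q j) -> inpre p m n = inpre q m n.
Proof. intros H. destruct (inpre p m n) eqn:E1, (inpre q m n) eqn:E2; auto.
 - apply inpre_true in E1. destruct E1 as [j [Hj Hp]].
   assert (inpre q m n = true) by (apply inpre_true; exists j; split; auto; rewrite <- H; auto). congruence.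
 - apply inpre_true in E2. destruct E2 as [j [Hj Hp]].
   assert (inpre p m n = true) by (apply inpre_true; exists j; split; auto; rewrite H; auto). congruence.
Qed.

Lemma part1 : learn_le Erange E3.
Proof. intros sig K _ [G [Hc HG]]. exists (fun S => conv (G S)). split.
 - intros S HS n. destruct (Hc S HS n) as [L HL]. exists L. intros S' HS' Hag k Hk.
   unfold conv. pose proof (of_nat_snd_le k) as Hle.
   destruct (Cantor.of_nat k) as [m n'] eqn:E. simpl in Hle.
   rewrite (inpre_ext (G S') (G S) m n'). reflexivity. intros j Hj. apply HL; auto; lia.
 - intros S S' H1 H2. rewrite HG by auto. apply range_E3.
Qed.

Definition mate (x : nat) : nat := if Nat.odd x then S x else pred x.
Definition rel (b : bool) (x y : nat) : bool :=
  if x =? y then (if x =? 0 then b else Nat.odd x)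
  else andb (negb (x =? 0)) (y =? mate x).
Definition canon (b : bool) : structure := fun a =>
  match a with (0, [x; y]) => rel b x y | _ => false end.
Definition sig2 : signature := [2].
Definition K2 (S : structure) : Prop := S = canon true \/ S = canon false.

Lemma valid2 x y : valid_atom sig2 (0, [x; y]).
Proof. unfold valid_atom; simpl; split; auto. Qed.

Lemma valid_map sig i l (h : nat -> nat) : valid_atom sig (i, map h l) -> valid_atom sig (i, l).
Proof. unfold valid_atom; simpl. rewrite length_map. auto. Qed.
Lemma valid_map' sig i l (h : nat -> nat) : valid_atom sig (i, l) -> valid_atom sig (i, map h l).
Proof. unfold valid_atom; simpl. rewrite length_map. auto. Qed.

Lemma canon_wf b : wf_structure sig2 (canon b).
Proof. intros [i l] Ha. destruct i; [|reflexivity].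
  destruct l as [|x [|y [|z l]]]; try reflexivity. exfalso; apply Ha; apply valid2. Qed.

Lemma mate_ne x : x <> 0 -> mate x <> x.
Proof. unfold mate; destruct (Nat.odd x); lia. Qed.
Lemma mate_le x : mate x <= S x.
Proof. unfold mate; destruct (Nat.odd x); lia. Qed.
Lemma mate_nz x : x <> 0 -> mate x <> 0.
Proof. unfold mate; destruct (Nat.odd x) eqn:E; [lia|].
  destruct (Nat.eq_dec x 1); [subst; discriminate|lia]. Qed.

Lemma rel_mate b v : v <> 0 -> rel b v (mate v) = true.
Proof. intros Hv. unfold rel. pose proof (mate_ne v Hv).
  rewrite (proj2 (Nat.eqb_neq v (mate v))) by auto.
  rewrite (proj2 (Nat.eqb_neq v 0)) by auto. rewrite Nat.eqb_refl. reflexivity. Qed.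

Lemma rel_0 b y : y <> 0 -> rel b 0 y = false.
Proof. intros Hy. unfold rel. destruct (0 =? y) eqn:E; [apply Nat.eqb_eq in E; lia|]. reflexivity. Qed.

Lemma rel_indep b t x y : x <> 0 -> rel b x y = rel t x y.
Proof. intros Hx. unfold rel. rewrite (proj2 (Nat.eqb_neq x 0)) by auto. reflexivity. Qed.

Lemma iso_refl sig S : iso sig S S.
Proof. exists (fun x => x), (fun x => x). repeat split; auto.
  intros [i l] _. simpl. rewrite map_id. reflexivity. Qed.

Lemma iso_sym sig S T : iso sig S T -> iso sig T S.
Proof. intros [f [g [H1 [H2 H]]]]. exists g, f. repeat split; auto.
  intros [i l] Hv. simpl. rewrite (H (i, map g l)) by (apply valid_map'; auto). simpl.
  rewrite map_map. f_equal. f_equal. rewrite <- (map_id l) at 1. apply map_ext. auto. Qed.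

Lemma iso_trans sig S T U : iso sig S T -> iso sig T U -> iso sig S U.
Proof. intros [f1 [g1 [A1 [B1 H1]]]] [f2 [g2 [A2 [B2 H2]]]].
  exists (fun x => f2 (f1 x)), (fun x => g1 (g2 x)). repeat split.
  - intros x. rewrite A2. auto.
  - intros x. rewrite B1. auto.
  - intros [i l] Hv. rewrite H1 by auto. simpl. rewrite H2 by (apply valid_map'; auto).
    simpl. rewrite map_map. reflexivity. Qed.

Lemma iso_canon b1 b2 : iso sig2 (canon b1) (canon b2) -> b1 = b2.
Proof. intros [f [g [Hgf [Hfg H]]]].
  assert (HS : forall x y, rel b1 x y = rel b2 (f x) (f y)).
  { intros x y. apply (H (0, [x; y]) (valid2 x y)). }
  pose proof (HS 0 0) as H00. simpl in H00.
  destruct (Nat.eq_dec (f 0) 0) as [E|E].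
  - rewrite E in H00. exact H00.
  - exfalso. pose proof (HS 0 (g (mate (f 0)))) as H1. rewrite Hfg, rel_mate in H1 by auto.
    destruct (Nat.eq_dec (g (mate (f 0))) 0) as [E2|E2].
    + apply (mate_ne (f 0) E). rewrite <- (Hfg (mate (f 0))). rewrite E2. reflexivity.
    + rewrite rel_0 in H1 by auto. discriminate. Qed.

Lemma family2 : family sig2 K2.
Proof. split; [|split].
 - intros S [->| ->]; apply canon_wf.
 - exists (fun n => Some (canon (n =? 0))). intros S. split.
   + intros [->| ->]; [exists 0|exists 1]; reflexivity.
   + intros [n Hn]. injection Hn as <-. destruct (n =? 0); [left|right]; reflexivity.
 - intros S S' [->| ->] [->| ->] Hi; auto; apply iso_canon in Hi; discriminate.
Qed.

Lemma LD_inv S : LD sig2 K2 S -> exists b, iso sig2 S (canon b).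
Proof. intros [_ [T [[->| ->] Hi]]]; eauto. Qed.

Lemma LDcanon b : LD sig2 K2 (canon b).
Proof. split. apply canon_wf. exists (canon b). split. destruct b; [left|right]; auto. apply iso_refl. Qed.

Definition unm (St : structure) (s x : nat) : bool :=
  forallb (fun y => orb (y =? x) (negb (St (0, [x; y])))) (seq 0 (S s)).
Definition lrn (St : structure) (s : nat) : nat :=
  match find (unm St s) (seq 0 (S s)) with
  | Some x => if St (0, [x; x]) then 1 else 0
  | None => 0 end.

Lemma forallb_ext_in {A} (f g : A -> bool) l : (forall y, In y l -> f y = g y) -> forallb f l = forallb g l.
Proof. induction l; simpl; intros H; auto. rewrite H by auto. rewrite IHl; auto. Qed.
Lemma find_ext_in {A} (f g : A -> bool) l : (forall y, In y l -> f y = g y) -> find f l = find g l.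
Proof. induction l; simpl; intros H; auto. rewrite H by auto. rewrite IHl; auto. Qed.

Lemma lrn_ext St St' s : (forall x y, x <= s -> y <= s -> St (0,[x;y]) = St' (0,[x;y])) -> lrn St s = lrn St' s.
Proof. intros H. unfold lrn.
  assert (E : find (unm St s) (seq 0 (S s)) = find (unm St' s) (seq 0 (S s))).
  { apply find_ext_in. intros x Hx. apply in_seq in Hx. unfold unm. apply forallb_ext_in.
    intros y Hy. apply in_seq in Hy. rewrite H by lia. reflexivity. }
  rewrite <- E. destruct (find (unm St s) (seq 0 (S s))) eqn:F; auto.
  apply find_some in F. destruct F as [F _]. apply in_seq in F. rewrite H by lia. reflexivity. Qed.

Lemma find_seq (p : nat -> bool) n : forall a u, a <= u < a + n -> p u = true ->
  (forall x, a <= x < u -> p x = false) -> find p (seq a n) = Some u.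
Proof. induction n; intros a u Hu Hp Hl; [lia|]. simpl.
  destruct (Nat.eq_dec a u) as [->|Ne]. rewrite Hp; reflexivity.
  rewrite (Hl a) by lia. apply IHn; auto; [lia|]. intros; apply Hl; lia. Qed.

Lemma bound_fn (q : nat -> nat) u : exists M, forall x, x < u -> q x <= M.
Proof. induction u. exists 0; intros; lia. destruct IHu as [M HM]. exists (max M (q u)).
  intros x Hx. destruct (Nat.eq_dec x u) as [->|]; [lia|]. specialize (HM x ltac:(lia)). lia. Qed.

Lemma lrn_conv St b : iso sig2 St (canon b) -> exists N, forall s, N <= s -> lrn St s = if b then 1 else 0.
Proof. intros [f [g [Hgf [Hfg H]]]].
  assert (HS : forall x y, St (0,[x;y]) = rel b (f x) (f y)).
  { intros x y. apply (H (0, [x; y]) (valid2 x y)). }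
  assert (fnz : forall x, x <> g 0 -> f x <> 0).
  { intros x Hx E. apply Hx. rewrite <- E, Hgf. reflexivity. }
  assert (Hun : forall s, unm St s (g 0) = true).
  { intros s. unfold unm. apply forallb_forall. intros y _.
    destruct (Nat.eq_dec y (g 0)) as [->|Ne]. rewrite Nat.eqb_refl; reflexivity.
    rewrite HS, Hfg, rel_0 by (apply fnz; auto). apply Bool.orb_true_r. }
  assert (Hm : forall x s, x <> g 0 -> g (mate (f x)) <= s -> unm St s x = false).
  { intros x s Hx Hq. destruct (unm St s x) eqn:E; auto. unfold unm in E.
    rewrite forallb_forall in E. specialize (E (g (mate (f x))) ltac:(apply in_seq; lia)).
    rewrite HS, Hfg, rel_mate in E by (apply fnz; auto).
    assert (g (mate (f x)) <> x).
    { intros E2. apply (mate_ne (f x)). apply fnz; auto. rewrite <- E2 at 2. rewrite Hfg. auto. }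
    rewrite (proj2 (Nat.eqb_neq _ _)) in E by auto. discriminate. }
  destruct (bound_fn (fun x => g (mate (f x))) (g 0)) as [M HM].
  exists (M + g 0). intros s Hs. unfold lrn.
  rewrite (find_seq _ (S s) 0 (g 0)); auto; [|lia|].
  - rewrite HS, Hfg. simpl. destruct b; reflexivity.
  - intros x Hx. apply Hm. lia. specialize (HM x ltac:(lia)). simpl in HM. lia.
Qed.

Definition atomsL (n : nat) : list atom :=
  flat_map (fun x => map (fun y => (0, [x; y])) (seq 0 n)) (seq 0 n).

Lemma atomsL_in n x y : x < n -> y < n -> In (0, [x; y]) (atomsL n).
Proof. intros Hx Hy. unfold atomsL. apply in_flat_map. exists x. split. apply in_seq; lia.
  apply in_map_iff. exists y. split; auto. apply in_seq; lia. Qed.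

Lemma part2a : learnable E3 sig2 K2.
Proof. exists lrn. split.
 - intros S HS n. exists (atomsL n). intros S' HS' Hag k Hk.
   apply lrn_ext. intros x y Hx Hy. apply Hag. apply atomsL_in; lia.
 - intros S S' H1 H2. destruct (LD_inv S H1) as [b Hb]. destruct (LD_inv S' H2) as [b' Hb'].
   destruct (lrn_conv S b Hb) as [N1 HN1]. destruct (lrn_conv S' b' Hb') as [N2 HN2].
   split.
   + intros Hi. assert (b = b') as <-.
     { apply iso_canon. apply (iso_trans _ _ S). apply iso_sym; auto. apply (iso_trans _ _ S'); auto. }
     intros m. exists (N1 + N2). intros n Hn. unfold column.
     pose proof (cpair_ge m n). rewrite HN1, HN2 by lia. reflexivity.
   + intros HE. destruct (HE 0) as [M HM]. specialize (HM (M + N1 + N2) ltac:(lia)).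
     unfold column in HM. pose proof (cpair_ge 0 (M + N1 + N2)).
     rewrite HN1, HN2 in HM by lia.
     assert (b = b') as <- by (destruct b, b'; simpl in HM; congruence).
     apply (iso_trans _ _ (canon b)); auto. apply iso_sym; auto.
Qed.

Definition swp (c x : nat) : nat := if x =? 0 then c else if x =? c then 0 else x.
Lemma swp_inv c x : c <> 0 -> swp c (swp c x) = x.
Proof. intros Hc. unfold swp.
  destruct (Nat.eqb_spec x 0); subst.
  - rewrite (proj2 (Nat.eqb_neq c 0)) by auto. rewrite Nat.eqb_refl. reflexivity.
  - destruct (Nat.eqb_spec x c); subst.
    + reflexivity.
    + rewrite (proj2 (Nat.eqb_neq x 0)) by auto. rewrite (proj2 (Nat.eqb_neq x c)) by auto. reflexivity.
Qed.

Definition mods (b : bool) (c : nat) : structure := fun a => canon b (fst a, map (swp c) (snd a)).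

Lemma mods_LD b c : c <> 0 -> LD sig2 K2 (mods b c) /\ iso sig2 (mods b c) (canon b).
Proof. intros Hc. assert (Hi : iso sig2 (mods b c) (canon b)).
  { exists (swp c), (swp c). repeat split; intros; try (apply swp_inv; auto). }
  split; auto. split.
  - intros [i l] Hv. unfold mods. apply (canon_wf b (i, map (swp c) l)). intros Hv'. apply Hv. eapply valid_map; eauto.
  - exists (canon b). split; auto. destruct b; [left|right]; auto.
Qed.

Lemma agree b t c N x y : N + 2 <= c -> Nat.odd c = t -> N < mate c -> x <= N -> y <= N ->
  rel b (swp c x) (swp c y) = rel t x y.
Proof. intros Hc Ho Hm Hx Hy. unfold swp.
  assert (Hxc : (x =? c) = false) by (apply Nat.eqb_neq; lia).
  assert (Hyc : (y =? c) = false) by (apply Nat.eqb_neq; lia).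
  rewrite Hxc, Hyc.
  destruct (Nat.eqb_spec x 0) as [->|Hx0]; destruct (Nat.eqb_spec y 0) as [->|Hy0].
  - unfold rel. rewrite Nat.eqb_refl. rewrite (proj2 (Nat.eqb_neq c 0)) by lia. simpl. auto.
  - rewrite rel_0 by auto. unfold rel. rewrite (proj2 (Nat.eqb_neq c y)) by lia.
    rewrite (proj2 (Nat.eqb_neq y (mate c))) by lia. apply Bool.andb_false_r.
  - pose proof (mate_le x). pose proof (mate_nz x Hx0). unfold rel.
    rewrite (proj2 (Nat.eqb_neq x c)) by lia. rewrite (proj2 (Nat.eqb_neq x 0)) by lia.
    rewrite (proj2 (Nat.eqb_neq c (mate x))) by lia.
    rewrite (proj2 (Nat.eqb_neq 0 (mate x))) by lia. reflexivity.
  - apply rel_indep; auto.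
Qed.

Lemma choose_c b N : exists c, N + 2 <= c /\ Nat.odd c = b /\ N < mate c.
Proof. destruct b.
  - exists (2 * N + 3). assert (Nat.odd (2 * N + 3) = true) as E.
    { apply Nat.odd_spec. exists (N + 1). lia. }
    unfold mate. rewrite E. lia.
  - exists (2 * N + 4). assert (Nat.odd (2 * N + 4) = false) as E.
    { destruct (Nat.odd (2 * N + 4)) eqn:E; auto. apply Nat.odd_spec in E. destruct E. lia. }
    unfold mate. rewrite E. lia.
Qed.

Lemma in_list_max x l : In x l -> x <= list_max l.
Proof. intros H. pose proof (proj1 (list_max_le l (list_max l)) (le_n _)) as F.
  rewrite Forall_forall in F. auto. Qed.

Lemma part2b : ~ learnable Erange sig2 K2.
Proof. intros [G [Hc HG]].
  assert (cross : forall b m, exists k, G (canon b) m = G (canon (negb b)) k).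
  { intros b m. destruct (Hc (canon b) (LDcanon b) (S m)) as [L HL].
    set (N := list_max (flat_map snd L)).
    destruct (choose_c b N) as [c [C1 [C2 C3]]].
    destruct (mods_LD (negb b) c ltac:(lia)) as [HLD Hiso].
    assert (Hag : forall a, In a L -> mods (negb b) c a = canon b a).
    { intros [i l] Ha. unfold mods. simpl. destruct i as [|i]; [|reflexivity].
      destruct l as [|x [|y [|z l]]]; try reflexivity. simpl.
      assert (x <= N /\ y <= N) as [Hx Hy].
      { split; apply in_list_max; apply in_flat_map; exists (0, [x; y]); simpl; auto. }
      apply (agree _ _ c N); auto. }
    pose proof (HL _ HLD Hag m ltac:(lia)) as E1.
    destruct (proj1 (HG _ _ HLD (LDcanon (negb b))) Hiso) as [H1 _].
    destruct (H1 m) as [k Hk]. exists k. congruence. }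
  enough (Hi : iso sig2 (canon true) (canon false)) by (apply iso_canon in Hi; discriminate).
  apply (proj2 (HG _ _ (LDcanon true) (LDcanon false))). split.
  - apply (cross true).
  - apply (cross false).
Qed.

Theorem mainTheorem9 :
  learn_le Erange E3 /\
  exists (sig : signature) (K : structure -> Prop),
    family sig K /\ learnable E3 sig K /\ ~ learnable Erange sig K.
Proof.
  split. apply part1. exists sig2, K2. split. apply family2. split. apply part2a. apply part2b.
Qed.
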